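(* Let $G$ be a complete edge-colored graph such that for each strong module $M$ of $G$ the quotient graph $G[M]/\mathbb{P}_{\max}(M)$ is a complete edge-colored permutation graph. Then $G$ is a complete edge-colored permutation graph.
   Context: A complete $k$-edge-colored graph $G=(V,E_1,\dots,E_k)$ is the complete graph on a finite set $V$ with edges partitioned into $k$ nonempty color classes $E_i$ (the one-vertex graph also counts); $G_{|i}=(V,E_i)$. A labeling is a bijection $\ell:V\to\{1,\dots,|V|\}$. A graph $(V,E)$ with labeling $\ell$ is a simple permutation graph of a permutation $\pi$ if for all $u,v$ with $\ell(u)>\ell(v)$: $\{u,v\}\in E$ iff $\pi^{-1}(\ell(u))<\pi^{-1}(\ell(v))$. $G$ is a complete edge-colored permutation graph if there exist a labeling $\ell$ and permutations $\pi_1,\dots,\pi_k$ with $(G_{|i},\ell)$ a simple permutation graph of $\pi_i$ for all $i$. A module is a set $M\subseteq V$ such that for every $v\notin M$ all edges $\{u,v\}$, $u\in M$, have the same color; a strong module is a nonempty module comparable by inclusion or disjoint with every other module. For a strong module $M$ with $|M|\ge2$, $\mathbb{P}_{\max}(M)$ is the set of inclusion-maximal strong modules properly contained in $M$, and $G[M]/\mathbb{P}_{\max}(M)$ is the complete graph on $\mathbb{P}_{\max}(M)$ with $\{M_a,M_b\}$ colored by the common color of all edges between $M_a$ and $M_b$; for $|M|=1$ it is the one-vertex graph. *)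

(* Defs.v *)
From mathcomp Require Import all_boot all_fingroup.
Set Implicit Arguments. Unset Strict Implicit. Unset Printing Implicit Defensive.

(* A complete k-edge-colored graph on a finite vertex type V is given by a
   colouring c : V -> V -> 'I_k of the (unordered) pairs; c u u is irrelevant.
   Edge {u,v} (u != v) lies in E_i iff c u v = i. *)

Section Defs.
Variables (V : finType) (k : nat).

Definition complete_colored_graph (c : V -> V -> 'I_k) : Prop :=
  (forall u v, c u v = c v u) /\
  (#|V| = 1 \/ forall i : 'I_k, exists u v, u != v /\ c u v = i).

Definition color_class (c : V -> V -> 'I_k) (i : 'I_k) : rel V :=
  fun u v => (u != v) && (c u v == i).

Definition is_module (c : V -> V -> 'I_k) (M : {set V}) : bool :=
  [forall v, (v \notin M) ==> [forall u in M, forall u' in M, c u v == c u' v]].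

Definition strong_module (c : V -> V -> 'I_k) (M : {set V}) : bool :=
  [&& M != set0, is_module c M &
      [forall M' : {set V}, is_module c M' ==>
         [|| M \subset M', M' \subset M | [disjoint M & M']]]].

Definition Pmax (c : V -> V -> 'I_k) (M : {set V}) : {set {set V}} :=
  [set P : {set V} | [&& strong_module c P, P \proper M &
     [forall Q : {set V}, (strong_module c Q && (Q \proper M)) ==> ~~ (P \proper Q)]]].

Definition qvert (c : V -> V -> 'I_k) (M : {set V}) : finType :=
  {P : {set V} | P \in Pmax c M}.

(* colour classes of G[M]/P_max(M): {Ma, Mb} (Ma != Mb) has colour i iff the
   (common) colour of the edges between Ma and Mb is i *)
Definition qclass (c : V -> V -> 'I_k) (M : {set V}) (i : 'I_k) : rel (qvert c M) :=
  fun P Q => (P != Q) && [exists x in val P, exists y in val Q, c x y == i].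

End Defs.
Arguments qclass {V k} c M i _ _.

Section PermGraph.
Variables (T : finType) (k : nat).

(* (T, E) with labeling l (0-indexed: l : T -> 'I_#|T|) is a simple
   permutation graph of pi. *)
Definition simple_perm_graph (E : rel T) (l : T -> 'I_#|T|) (pi : {perm 'I_#|T|}) : Prop :=
  forall u v, l v < l u -> (E u v <-> (pi^-1)%g (l u) < (pi^-1)%g (l v)).

Definition colored_perm_graph (E : 'I_k -> rel T) : Prop :=
  exists l : T -> 'I_#|T|, bijective l /\
  exists pis : 'I_k -> {perm 'I_#|T|},
    forall i, simple_perm_graph (E i) l (pis i).

End PermGraph.

(* Main.v *)
Require Import Defs.
From mathcomp Require Import all_boot all_fingroup.
From mathcomp Require Import zify.
From Stdlib Require Import ClassicalEpsilon.
Set Implicit Arguments. Unset Strict Implicit. Unset Printing Implicit Defensive.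

Definition rk (V : finType) (h : V -> nat) (x : V) : nat := #|[set y | h y < h x]|.

Lemma rk_lt (V : finType) (h : V -> nat) x : rk h x < #|V|.
Proof.
rewrite /rk -cardsT; apply: proper_card; apply/properP; split; first exact: subsetT.
by exists x; rewrite ?inE ?ltnn.
Qed.

Lemma rk_mono (V : finType) (h : V -> nat) x y : (rk h x < rk h y) = (h x < h y).
Proof.
rewrite /rk; case: (ltnP (h x) (h y)) => hxy.
  apply: proper_card; apply/properP; split.
    by apply/subsetP => z; rewrite !inE => /ltn_trans; apply.
  by exists x; rewrite !inE ?ltnn.
apply/negbTE; rewrite -leqNgt; apply/subset_leq_card/subsetP => z; rewrite !inE => /leq_trans; apply; exact: hxy.
Qed.
Lemma lex_lt n a b r s : r < n -> s < n -> (a * n + r < b * n + s) = (a < b) || ((a == b) && (r < s)).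
Proof.
move=> rn sn; case: (ltngtP a b) => [ab|ba|->] /=.
- have: a.+1 * n <= b * n by rewrite leq_mul2r ab orbT.
  rewrite mulSn => H; lia.
- have: b.+1 * n <= a * n by rewrite leq_mul2r ba orbT.
  rewrite mulSn => H; lia.
- by rewrite ltn_add2l.
Qed.

Lemma lex_inj n a b r s : r < n -> s < n -> a * n + r = b * n + s -> a = b /\ r = s.
Proof.
move=> rn sn e.
have h1 := @lex_lt n a b r s rn sn. have h2 := @lex_lt n b a s r sn rn.
rewrite e ltnn in h1. rewrite e ltnn in h2.
case: (ltngtP a b) h1 h2 => //= ab _ _; split => //.
by move: e; rewrite ab => /addnI.
Qed.
Lemma set1_module (V : finType) k (c : V -> V -> 'I_k) x : is_module c [set x].
Proof.
by apply/forallP => v; apply/implyP => _; apply/forall_inP => u; rewrite inE => /eqP ->;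
   apply/forall_inP => u'; rewrite inE => /eqP ->.
Qed.

Lemma set1_strong (V : finType) k (c : V -> V -> 'I_k) x : strong_module c [set x].
Proof.
apply/and3P; split; first by apply/set0Pn; exists x; rewrite inE.
  exact: set1_module.
apply/forallP => M'; apply/implyP => _.
case: (boolP (x \in M')) => xM.
  by rewrite sub1set xM.
by rewrite disjoints1 xM !orbT.
Qed.

Lemma setT_strong (V : finType) k (c : V -> V -> 'I_k) (x : V) : strong_module c [set: V].
Proof.
apply/and3P; split; first by apply/set0Pn; exists x.
  by apply/forallP => v; rewrite in_setT.
by apply/forallP => M'; apply/implyP => _; rewrite subsetT orbT.
Qed.

Lemma strong_cmp (V : finType) k (c : V -> V -> 'I_k) P Q :
  strong_module c P -> is_module c Q -> [|| P \subset Q, Q \subset P | [disjoint P & Q]].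
Proof. by case/and3P => _ _ /forallP /(_ Q) /implyP; apply. Qed.

Lemma Pmax_P (V : finType) k (c : V -> V -> 'I_k) M P :
  P \in Pmax c M -> [/\ strong_module c P, P \proper M &
     forall Q, strong_module c Q -> Q \proper M -> ~~ (P \proper Q)].
Proof.
rewrite inE => /and3P [sP pP /forallP H]; split => // Q sQ pQ.
by move: (H Q); rewrite sQ pQ.
Qed.

Lemma Pmax_disj (V : finType) k (c : V -> V -> 'I_k) M P Q :
  P \in Pmax c M -> Q \in Pmax c M -> P != Q -> [disjoint P & Q].
Proof.
move=> /Pmax_P [sP pP mP] /Pmax_P [sQ pQ mQ] nPQ.
case/and3P: (sQ) => _ modQ _.
case/or3P: (strong_cmp sP modQ) => // H.
  by move: (mP Q sQ pQ); rewrite properEneq nPQ H.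
by move: (mQ P sP pP); rewrite properEneq eq_sym nPQ H.
Qed.

Lemma Pmax_cover (V : finType) k (c : V -> V -> 'I_k) (M : {set V}) (x : V) :
  1 < #|M| -> x \in M -> exists2 P, P \in Pmax c M & x \in P.
Proof.
move=> cM xM.
have p1 : [set x] \proper M.
  rewrite properEcard sub1set xM cards1 //.
pose Pr := fun Q : {set V} => [&& strong_module c Q, Q \proper M & x \in Q].
have Pr1 : Pr [set x] by rewrite /Pr set1_strong p1 set11.
case: (arg_maxnP (fun Q : {set V} => #|Q|) Pr1) => P /and3P [sP pP xP] Hmax.
exists P => //; rewrite inE sP pP /=; apply/forallP => Q; apply/implyP => /andP [sQ pQ].
apply/negP => PQ.
have xQ : x \in Q by move/proper_sub/subsetP: PQ; apply.
have := Hmax Q; rewrite /Pr sQ pQ xQ => /(_ isT).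
move=> /= H; have := proper_card PQ; by rewrite ltnNge H.
Qed.

Lemma module_color (V : finType) k (c : V -> V -> 'I_k) P Q x x' y y' :
  (forall u v, c u v = c v u) -> is_module c P -> is_module c Q -> [disjoint P & Q] ->
  x \in P -> x' \in P -> y \in Q -> y' \in Q -> c x y = c x' y'.
Proof.
move=> cs /forallP mP /forallP mQ dPQ xP x'P yQ y'Q.
have yP : y \notin P by rewrite (disjointFl dPQ yQ).
have x'Q : x' \notin Q by rewrite (disjointFr dPQ x'P).
move: (mP y); rewrite yP => /forall_inP /(_ x xP) /forall_inP /(_ x' x'P) /eqP ->.
move: (mQ x'); rewrite x'Q => /forall_inP /(_ y yQ) /forall_inP /(_ y' y'Q) /eqP.
by rewrite cs [c x' y']cs.
Qed.
Definition qv_insub (V : finType) k (c : V -> V -> 'I_k) (M P : {set V}) : option (qvert c M) := insub P.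
Lemma qv_insubT (V : finType) k (c : V -> V -> 'I_k) (M P : {set V}) (PM : P \in Pmax c M) :
  qv_insub c M P = Some (Sub P PM : qvert c M).
Proof. by rewrite /qv_insub insubT. Qed.

Lemma rk_eq (V : finType) (h : V -> nat) x y : rk h x = rk h y -> h x = h y.
Proof.
move=> e; case: (ltngtP (h x) (h y)) => // H.
  by move: H; rewrite -(rk_mono h x y) e ltnn.
by move: H; rewrite -(rk_mono h y x) e ltnn.
Qed.

Definition goodfg (V : finType) k (c : V -> V -> 'I_k) (M : {set V})
  (f : V -> nat) (g : 'I_k -> V -> nat) : Prop :=
  {in M &, injective f} /\ (forall i, {in M &, injective (g i)}) /\
  (forall i u v, u \in M -> v \in M -> f v < f u -> (c u v == i) = (g i u < g i v)).

Lemma step (V : finType) k (c : V -> V -> 'I_k) (M : {set V}) :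
  (forall u v, c u v = c v u) -> strong_module c M -> 1 < #|M| ->
  colored_perm_graph (qclass c M) ->
  (forall P, P \in Pmax c M -> exists f g, goodfg c P f g) ->
  exists f g, goodfg c M f g.
Proof.
intros cs sM cM [lQ [lQbij [pis Hpis]]] IH.
have lQinj := bij_inj lQbij.
have [FG HFG] : exists FG : {set V} -> (V -> nat) * ('I_k -> V -> nat),
    forall P, P \in Pmax c M -> goodfg c P (FG P).1 (FG P).2.
  have H P : exists fg : (V -> nat) * ('I_k -> V -> nat), P \in Pmax c M -> goodfg c P fg.1 fg.2.
    case: (boolP (P \in Pmax c M)) => PM; last by exists (fun _ => 0, fun _ _ => 0).
    by case: (IH P PM) => f [g Hfg]; exists (f, g).
  exists (fun P => proj1_sig (constructive_indefinite_description _ (H P))) => P PM.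
  exact: (proj2_sig (constructive_indefinite_description _ (H P)) PM).
pose blk x := odflt set0 [pick P in Pmax c M | x \in P].
have blkP x : x \in M -> blk x \in Pmax c M /\ x \in blk x.
  move=> xM; rewrite /blk; case: pickP => [P /andP [? ?] | H] //=.
  case: (Pmax_cover c cM xM) => P PM xP; by move: (H P); rewrite PM xP.
pose idx P := if qv_insub c M P is Some q then (lQ q : nat) else 0.
pose sg i P := if qv_insub c M P is Some q then (((pis i)^-1)%g (lQ q) : nat) else 0.
pose n := #|V|.
pose f x := idx (blk x) * n + rk (FG (blk x)).1 x.
pose g i x := sg i (blk x) * n + rk ((FG (blk x)).2 i) x.
have idxE x : x \in M -> exists q : qvert c M,
    [/\ val q = blk x, idx (blk x) = lQ q & forall i, sg i (blk x) = ((pis i)^-1)%g (lQ q)].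
  move=> xM; case: (blkP x xM) => PM _; exists (Sub (blk x) PM); split => //.
    by rewrite /idx qv_insubT.
  by move=> i; rewrite /sg qv_insubT.
have blkE u v : u \in M -> v \in M -> forall qu qv : qvert c M, val qu = blk u -> val qv = blk v ->
    (lQ qu : nat) = lQ qv -> blk u = blk v.
  by move=> _ _ qu qv <- <- /ord_inj /lQinj ->.
exists f, g; split; last split.
- move=> u v uM vM; rewrite /f.
  case: (idxE u uM) => qu [quE -> _]; case: (idxE v vM) => qv [qvE -> _].
  move/(lex_inj (rk_lt _ _) (rk_lt _ _)) => [e1 e2].
  have Be := blkE u v uM vM qu qv quE qvE e1.
  move: e2; rewrite Be => /rk_eq.
  case: (blkP v vM) => /HFG [Hi _] vB; apply: Hi => //.
  by rewrite -Be; case: (blkP u uM).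
- move=> i u v uM vM; rewrite /g.
  case: (idxE u uM) => qu [quE _ ->]; case: (idxE v vM) => qv [qvE _ ->].
  move/(lex_inj (rk_lt _ _) (rk_lt _ _)) => [/ord_inj /perm_inj e1 e2].
  have Be := blkE u v uM vM qu qv quE qvE (congr1 val e1).
  move: e2; rewrite Be => /rk_eq.
  case: (blkP v vM) => /HFG [_ [Hi _]] vB; apply: Hi => //.
  by rewrite -Be; case: (blkP u uM).
move=> i u v uM vM; rewrite /f /g.
case: (idxE u uM) => qu [quE -> ->]; case: (idxE v vM) => qv [qvE -> ->].
case: (eqVneq qu qv) => [equv | nquv].
  subst qv; have Be : blk v = blk u by rewrite -qvE quE.
  rewrite Be !ltn_add2l !rk_mono => lt.
  case: (blkP u uM) => /HFG [_ [_ Hc]] uB.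
  apply: Hc => //; by rewrite -Be; case: (blkP v vM).
rewrite lex_lt ?rk_lt // => /orP [lt | /andP [/eqP /ord_inj /lQinj e _]]; last first.
  by rewrite e eqxx in nquv.
rewrite lex_lt ?rk_lt //.
have -> : (((pis i)^-1)%g (lQ qu) == ((pis i)^-1)%g (lQ qv) :> nat) = false.
  apply/negbTE; apply: contra nquv => /eqP /ord_inj /perm_inj /lQinj ->; done.
rewrite andFb orbF.
have -> : (c u v == i) = qclass c M i qu qv.
  rewrite /qclass nquv /=.
  case: (blkP u uM) => PuM uB; case: (blkP v vM) => PvM vB.
  have dj : [disjoint val qu & val qv].
    rewrite quE qvE; apply: (Pmax_disj PuM PvM).
    by apply: contra nquv => /eqP Be; apply/eqP/val_inj; rewrite quE qvE.
  case/Pmax_P: PuM => /and3P [_ mu _] _ _; case/Pmax_P: PvM => /and3P [_ mv _] _ _.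
  apply/idP/idP.
    by move=> ci; apply/exists_inP; exists u; rewrite ?quE //; apply/exists_inP; exists v; rewrite ?qvE.
  case/exists_inP => x xu /exists_inP [y yv /eqP <-].
  rewrite -quE -qvE in mu mv.
  apply/eqP; apply: (module_color cs mu mv dj) => //; by rewrite ?quE ?qvE.
by apply/idP/idP => H; apply/(Hpis i qu qv lt).
Qed.

Lemma all_good (V : finType) k (c : V -> V -> 'I_k) :
  (forall u v, c u v = c v u) ->
  (forall M : {set V}, strong_module c M -> 2 <= #|M| ->
     colored_perm_graph (qclass c M)) ->
  forall M, strong_module c M -> exists f g, goodfg c M f g.
Proof.
move=> cs H M; move: {2}#|M| (leqnn #|M|) => n; elim: n M => [|n IHn] M cMn sM.
  exists (fun _ => 0), (fun _ _ => 0); split; last split => //.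
    by move=> x y xM; move: cMn; rewrite leqn0 => /eqP/cards0_eq E; rewrite E inE in xM.
  by move=> i x y xM; move: cMn; rewrite leqn0 => /eqP/cards0_eq E; rewrite E inE in xM.
case: (leqP #|M| 1) => cM.
  exists (fun _ => 0), (fun _ _ => 0); split; last split => //.
    by move=> x y xM yM _; move/card_le1_eqP: cM => E; apply: E.
  by move=> i x y xM yM _; move/card_le1_eqP: cM => E; apply: E.
apply: step => //; first by apply: H.
move=> P PM.
case/Pmax_P: PM => sP pP _.
apply: IHn => //.
by rewrite -ltnS; apply: leq_trans cMn; apply: proper_card.
Qed.

Lemma final (V : finType) k (c : V -> V -> 'I_k) (f : V -> nat) (g : 'I_k -> V -> nat) :
  goodfg c [set: V] f g -> colored_perm_graph (color_class c).
Proof.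
case=> fi [gi Hc].
pose l x := Ordinal (rk_lt f x).
have linj : injective l.
  by move=> x y /(congr1 val) /= /rk_eq; apply: fi; rewrite inE.
have lbij : bijective l by apply: (inj_card_bij linj); rewrite card_ord.
exists l; split => //.
case: lbij => l' lK Kl.
pose tau i j := Ordinal (rk_lt (g i) (l' j)).
have tinj i : injective (tau i).
  move=> a b /(congr1 val) /= /rk_eq /gi; rewrite !inE => /(_ isT isT).
  exact: (can_inj Kl).
exists (fun i => (perm (tinj i))^-1)%g => i u v lt.
rewrite invgK !permE /tau /= !lK rk_mono.
move: lt; rewrite /= rk_mono => lt.
have uv : u != v by apply: contraTneq lt => ->; rewrite ltnn.
rewrite /color_class uv /= (Hc i u v) ?inE //.
Qed.

Theorem proposition4p9 (V : finType) (k : nat) (c : V -> V -> 'I_k) :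
  complete_colored_graph c ->
  (forall M : {set V}, strong_module c M -> 2 <= #|M| ->
     colored_perm_graph (qclass c M)) ->
  colored_perm_graph (color_class c).
Proof.
case=> cs _ H.
case: (pickP (fun _ : V => true)) => [x _ | V0].
  case: (all_good cs H (setT_strong c x)) => f [g G].
  exact: final G.
apply: (@final _ _ c (fun _ => 0) (fun _ _ => 0)).
split; last split.
- by move=> x; have := V0 x.
- by move=> i x; have := V0 x.
- by move=> i x; have := V0 x.
Qed.
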